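(* Let $D_+$ and $D_-$ be link diagrams that differ only at a single crossing $c$, which is positive in $D_+$ and negative in $D_-$, and let $e_j,e_k$ be two diagonally opposite edges at $c$. Define $f:C_{Lee}(D_+)\to C_{Lee}(D_-)$ by $f(a^0,a^1)=((X_j-X_k)a^1,\,a^0)$ and $g:C_{Lee}(D_-)\to C_{Lee}(D_+)$ by $g(b^0,b^1)=((X_j-X_k)b^1,\,b^0)$. Then $f$ and $g$ are chain maps.
   Context: Lee complex. For an oriented link diagram $D$ with crossings $c_1,\dots,c_n$ and edges $e_1,\dots,e_m$ (as a 4-valent graph), let $R'=\mathbb{Q}[X_1,\dots,X_m,t]/(X_1^2=\dots=X_m^2=t)$. For $v\in\{0,1\}^n$ let $D_v$ be the resolution ($0$- or $1$-resolution at each crossing, standard Khovanov conventions) and $R_v=R'/(X_p=X_q$ if $e_p,e_q$ lie on the same circle of $D_v)$; $C_{Lee}(D)=\bigoplus_v R_v$. For $u,v$ differing only at $c_i$ ($u_i=0,v_i=1$), with edges at $c_i$ labeled $e_a$ (top left), $e_b$ (bottom left), $e_c$ (top right), $e_d$ (bottom right) so that the $0$-resolution joins $e_a$–$e_c$, $e_b$–$e_d$ and the $1$-resolution joins $e_a$–$e_b$, $e_c$–$e_d$: the edge map $\delta_{u,v}$ is the projection $R_u\to R_v$ if two circles merge, and multiplication by $X_b+X_c$ if a circle splits. The differential is $\delta=\sum_{u\lessdot v}(-1)^{\epsilon_{u,v}}\delta_{u,v}$, $\epsilon_{u,v}=\sum_{j<i}u_j$. Setting: $D_+$ and $D_-$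 have the same underlying 4-valent graph, hence the same edges and the same ring $R'$. The crossings are ordered identically in both, with $c$ last. Let $D_\pm^0,D_\pm^1$ be the $0$- and $1$-resolutions at $c$; then $D_+^0=D_-^1$ and $D_+^1=D_-^0$ as diagrams. As modules $C_{Lee}(D_\pm)=C_{Lee}(D_\pm^0)\oplus C_{Lee}(D_\pm^1)$, where $C_{Lee}(D_\pm^\epsilon)$ is the sum of the $R_v$ with $v_c=\epsilon$, and we write elements as $a=(a^0,a^1)$ accordingly. In the formula for $f$, $(X_j-X_k)a^1\in C_{Lee}(D_+^1)=C_{Lee}(D_-^0)$ and $a^0\in C_{Lee}(D_+^0)=C_{Lee}(D_-^1)$; similarly for $g$. *)

(* Defs.v *)
From HB Require Import structures.
From mathcomp Require Import all_boot all_order all_algebra.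
From mathcomp Require Import mpoly.
Set Implicit Arguments. Unset Strict Implicit. Unset Printing Implicit Defensive.
Import Order.TTheory GRing.Theory Num.Theory.
Local Open Scope ring_scope.

(* A (combinatorial) oriented link diagram with N crossings (ordered c_0 .. c_{N-1})
   and m edges e_0 .. e_{m-1} of the underlying 4-valent graph.
   At crossing i, placed in the standard Khovanov position, the edges are
   ea i (top left), eb i (bottom left), ec i (top right), ed i (bottom right);
   the 0-resolution joins ea-ec, eb-ed, the 1-resolution joins ea-eb, ec-ed.
   The two strands through crossing i are ea-ed and eb-ec.
   Orientation: inA i (resp. inB i) says the edge at the top-left (resp.
   bottom-left) slot points INTO the crossing; then the bottom-right (resp.
   top-right) slot points out of it, i.e. its "in" flag is ~~ inA i (~~ inB i). *)
Record diagram (N m : nat) := Diagram {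
  ea : 'I_N -> 'I_m; eb : 'I_N -> 'I_m; ec : 'I_N -> 'I_m; ed : 'I_N -> 'I_m;
  inA : 'I_N -> bool; inB : 'I_N -> bool }.

Section Diag.
Variables (N m : nat).
Implicit Types (D : diagram N m).

(* slots (crossing, position 0=TL,1=BL,2=TR,3=BR) *)
Definition slot_edge D (s : 'I_N * 'I_4) : 'I_m :=
  match val s.2 with 0 => ea D s.1 | 1 => eb D s.1 | 2 => ec D s.1 | _ => ed D s.1 end.
Definition slot_in D (s : 'I_N * 'I_4) : bool :=
  match val s.2 with 0 => inA D s.1 | 1 => inB D s.1 | 2 => ~~ inB D s.1 | _ => ~~ inA D s.1 end.

Definition wf_diagram D : Prop :=
  forall e : 'I_m,
    #|[set s | slot_edge D s == e]| = 2 /\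
    #|[set s | (slot_edge D s == e) && slot_in D s]| = 1.

(* Standard Khovanov convention: a crossing is positive iff its 0-resolution
   is the oriented resolution (each arc joins an incoming to an outgoing edge). *)
Definition positive_crossing D (i : 'I_N) : bool := inA D i == inB D i.
Definition negative_crossing D (i : 'I_N) : bool := ~~ positive_crossing D i.

Definition state := {ffun 'I_N -> bool}.

Definition res_rel D (v : state) : rel 'I_m := fun p q =>
  [exists i : 'I_N,
    if v i then
      [|| (p == ea D i) && (q == eb D i), (p == eb D i) && (q == ea D i),
          (p == ec D i) && (q == ed D i) | (p == ed D i) && (q == ec D i)]
    else
      [|| (p == ea D i) && (q == ec D i), (p == ec D i) && (q == ea D i),
          (p == eb D i) && (q == ed D i) | (p == ed D i) && (q == eb D i)]].

Definition same_circle D (v : state) (p q : 'I_m) : bool := connect (res_rel D v) p q.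

(* R' = Q[X_1..X_m, t]/(X_i^2 = t): polynomial representatives in m+1 variables,
   variable m being t. *)
Definition lpoly := {mpoly rat[m.+1]}.
Definition Xe (e : 'I_m) : lpoly := 'X_(widen_ord (leqnSn m) e).
Definition tvar : lpoly := 'X_(@ord_max m).

(* The ideal defining R_v = R'/(X_p = X_q for e_p, e_q on the same circle of D_v),
   as an ideal of Q[X_1..X_m,t]. *)
Definition lee_ideal D (v : state) (x : lpoly) : Prop :=
  exists (q : 'I_m -> lpoly) (r : 'I_m -> 'I_m -> lpoly),
    x = \sum_(e < m) q e * (Xe e ^+ 2 - tvar)
        + \sum_(e1 < m) \sum_(e2 < m)
            (if same_circle D v e1 e2 then r e1 e2 * (Xe e1 - Xe e2) else 0).

Definition lee_eq D (v : state) (x y : lpoly) : Prop := lee_ideal D v (x - y).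

(* An element of C_Lee(D) = (+)_v R_v, given by a representative in each summand. *)
Definition lee_chain := state -> lpoly.

Definition setst (v : state) (i : 'I_N) (b : bool) : state :=
  [ffun j => if j == i then b else v j].

(* edge map delta_{u,v} at crossing i (u = v with i reset to 0), applied to a
   representative; v is the target state.  Two circles merge iff afterwards
   eb i and ec i lie on the same circle of D_v; otherwise a circle splits. *)
Definition edge_map D (v : state) (i : 'I_N) (x : lpoly) : lpoly :=
  if same_circle D v (eb D i) (ec D i) then x
  else (Xe (eb D i) + Xe (ec D i)) * x.

Definition eps (v : state) (i : 'I_N) : nat := #|[set j : 'I_N | (j < i)%N && v j]|.

Definition lee_diff D (a : lee_chain) : lee_chain := fun v =>
  \sum_(i : 'I_N | v i) (-1) ^+ eps v i * edge_map D v i (a (setst v i false)).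

Definition is_chain_map D1 D2 (F : lee_chain -> lee_chain) : Prop :=
  (forall a a' : lee_chain, (forall v, lee_eq D1 v (a v) (a' v)) ->
     forall v, lee_eq D2 v (F a v) (F a' v)) /\
  (forall (a : lee_chain) (v : state),
     lee_eq D2 v (F (lee_diff D1 a) v) (lee_diff D2 (F a) v)).

(* The maps f, g: (a^0, a^1) |-> ((X_j - X_k) a^1, a^0), where a^0 is the part
   with v_c = 0, a^1 the part with v_c = 1, and the identifications
   C(D_+^1) = C(D_-^0), C(D_+^0) = C(D_-^1) only change the c-coordinate. *)
Definition cross_map (c : 'I_N) (j k : 'I_m) (a : lee_chain) : lee_chain := fun v =>
  if v c then a (setst v c false) else (Xe j - Xe k) * a (setst v c true).

Definition same_crossing D1 D2 (i : 'I_N) : Prop :=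
  [/\ ea D1 i = ea D2 i, eb D1 i = eb D2 i, ec D1 i = ec D2 i & ed D1 i = ed D2 i] /\
  (inA D1 i = inA D2 i /\ inB D1 i = inB D2 i).

(* D2 is obtained from D1 by changing crossing c: same four edges (and
   orientations) in the plane, redrawn in standard position, i.e. rotated by a
   quarter turn (either direction). *)
Definition crossing_change D1 D2 (c : 'I_N) : Prop :=
  ([/\ ea D2 c = eb D1 c, eb D2 c = ed D1 c, ec D2 c = ea D1 c & ed D2 c = ec D1 c] /\
   (inA D2 c = inB D1 c /\ inB D2 c = ~~ inA D1 c))
  \/
  ([/\ ea D2 c = ec D1 c, eb D2 c = ea D1 c, ec D2 c = ed D1 c & ed D2 c = eb D1 c] /\
   (inA D2 c = ~~ inB D1 c /\ inB D2 c = inA D1 c)).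

Definition diag_opposite D (c : 'I_N) (j k : 'I_m) : bool :=
  [|| (j == ea D c) && (k == ed D c), (j == ed D c) && (k == ea D c),
      (j == eb D c) && (k == ec D c) | (j == ec D c) && (k == eb D c)].

End Diag.

(* Main.v *)
Require Import Defs.
From HB Require Import structures.
From mathcomp Require Import all_boot all_order all_algebra.
From mathcomp Require Import mpoly ring.
Set Implicit Arguments. Unset Strict Implicit. Unset Printing Implicit Defensive.
Import Order.TTheory GRing.Theory Num.Theory.
Local Open Scope ring_scope.
Section Ideal.
Variables (N m : nat) (D : diagram N m) (v : state N).
Local Notation I := (lee_ideal D v).

Lemma I0 : I 0.
Proof.
exists (fun _ => 0), (fun _ _ => 0).
rewrite big1 ?add0r; last by move=> e _; rewrite mul0r.
by rewrite big1 // => e1 _; rewrite big1 // => e2 _; case: ifP; rewrite ?mul0r.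
Qed.

Lemma ID x y : I x -> I y -> I (x + y).
Proof.
move=> [q1 [r1 ->]] [q2 [r2 ->]].
exists (fun e => q1 e + q2 e), (fun a b => r1 a b + r2 a b).
have -> : \sum_(e < m) (q1 e + q2 e) * (Xe e ^+ 2 - tvar m) =
  \sum_(e < m) q1 e * (Xe e ^+ 2 - tvar m) + \sum_(e < m) q2 e * (Xe e ^+ 2 - tvar m).
  by rewrite -big_split /=; apply: eq_bigr => e _; rewrite mulrDl.
have -> : \sum_(e1 < m) \sum_(e2 < m) (if same_circle D v e1 e2 then (r1 e1 e2 + r2 e1 e2) * (Xe e1 - Xe e2) else 0) =
  \sum_(e1 < m) \sum_(e2 < m) (if same_circle D v e1 e2 then r1 e1 e2 * (Xe e1 - Xe e2) else 0)
  + \sum_(e1 < m) \sum_(e2 < m) (if same_circle D v e1 e2 then r2 e1 e2 * (Xe e1 - Xe e2) else 0).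
  rewrite -big_split /=; apply: eq_bigr => e1 _; rewrite -big_split /=; apply: eq_bigr => e2 _.
  by case: ifP => _ /=; rewrite ?addr0 // mulrDl.
by rewrite /= addrACA.
Qed.

Lemma IM y x : I x -> I (y * x).
Proof.
move=> [q [r ->]].
exists (fun e => y * q e), (fun a b => y * r a b).
rewrite mulrDr !mulr_sumr; congr (_ + _).
  by apply: eq_bigr => e _; rewrite mulrA.
apply: eq_bigr => e1 _; rewrite mulr_sumr; apply: eq_bigr => e2 _.
by case: ifP; rewrite ?mulr0 // mulrA.
Qed.

Lemma IN x : I x -> I (- x).
Proof. by move=> h; rewrite -mulN1r; apply: IM. Qed.

Lemma IB x y : I x -> I y -> I (x - y).
Proof. by move=> hx hy; apply: ID => //; apply: IN. Qed.

Lemma IX e : I (Xe e ^+ 2 - tvar m).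
Proof.
exists (fun e' => if e' == e then 1 else 0), (fun _ _ => 0).
set S := (X in _ = _ + X).
have -> : S = 0.
  by rewrite /S big1 // => e1 _; rewrite big1 // => e2 _; case: ifP; rewrite ?mul0r.
rewrite addr0.
rewrite (bigD1 e) //= eqxx mul1r big1 ?addr0 // => e' /negbTE ->.
by rewrite mul0r.
Qed.

Lemma IS p q : same_circle D v p q -> I (Xe p - Xe q).
Proof.
move=> hpq.
exists (fun _ => 0), (fun a b => if (a == p) && (b == q) then 1 else 0).
rewrite big1 ?add0r; last by move=> e _; rewrite mul0r.
rewrite (bigD1 p) //= (bigD1 q) //= hpq !eqxx /= mul1r.
rewrite big1 ?addr0; last first.
  by move=> e /negbTE ->; rewrite ?andbF /=; case: ifP; rewrite ?mul0r.
rewrite big1 ?addr0 // => e1 /negbTE ne1; rewrite big1 // => e2 _.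
by rewrite ne1; case: ifP; rewrite ?mul0r.
Qed.

End Ideal.

Section Circ.
Variables (N m : nat) (D : diagram N m) (v : state N).

Lemma res_sym : ssrbool.symmetric (res_rel D v).
Proof.
move=> p q; apply/idP/idP; case/existsP=> i h; apply/existsP; exists i; move: h;
  case: (v i) => /=; by case/or4P => /andP[/eqP-> /eqP->]; rewrite !eqxx /= ?orbT.
Qed.

Lemma sc_sym p q : same_circle D v p q = same_circle D v q p.
Proof. exact: (sym_connect_sym res_sym). Qed.

Lemma sc_trans q p r : same_circle D v p q -> same_circle D v q r -> same_circle D v p r.
Proof. exact: connect_trans. Qed.

Lemma edge_mapM i x y : edge_map D v i (x * y) = x * edge_map D v i y.
Proof. by rewrite /edge_map; case: ifP => // _; rewrite mulrCA. Qed.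

Lemma Kl (i : 'I_N) j k y : v i -> diag_opposite D i j k ->
  lee_ideal D v (edge_map D v i ((Xe j - Xe k) * y)).
Proof.
move=> vi hd.
have ab : same_circle D v (ea D i) (eb D i).
  by apply: connect1; apply/existsP; exists i; rewrite vi !eqxx.
have cd : same_circle D v (ec D i) (ed D i).
  by apply: connect1; apply/existsP; exists i; rewrite vi !eqxx /= ?orbT.
rewrite /edge_map; case: ifP => hbc.
  rewrite mulrC; apply: IM; apply: IS.
  have ad : same_circle D v (ea D i) (ed D i) by apply: (sc_trans ab); apply: (sc_trans hbc).
  by case/or4P: hd => /andP[/eqP-> /eqP->] //; rewrite sc_sym.
rewrite mulrA mulrC; apply: IM.
have h1 : lee_ideal D v ((Xe (eb D i) + Xe (ec D i)) * (Xe (ea D i) - Xe (ed D i))).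
  have -> : (Xe (eb D i) + Xe (ec D i)) * (Xe (ea D i) - Xe (ed D i)) =
     (Xe (eb D i) + Xe (ec D i)) * (Xe (ea D i) - Xe (eb D i)) +
     (Xe (eb D i) + Xe (ec D i)) * (Xe (ec D i) - Xe (ed D i)) +
     ((Xe (eb D i) ^+ 2 - tvar m) - (Xe (ec D i) ^+ 2 - tvar m)) by ring.
  apply: ID; first apply: ID; try (apply: IM; apply: IS => //).
  by apply: IB; apply: IX.
have h2 : lee_ideal D v ((Xe (eb D i) + Xe (ec D i)) * (Xe (eb D i) - Xe (ec D i))).
  have -> : (Xe (eb D i) + Xe (ec D i)) * (Xe (eb D i) - Xe (ec D i)) =
     ((Xe (eb D i) ^+ 2 - tvar m) - (Xe (ec D i) ^+ 2 - tvar m)) by ring.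
  by apply: IB; apply: IX.
case/or4P: hd => /andP[/eqP-> /eqP->] //; rewrite -opprB mulrN; exact: IN.
Qed.

End Circ.

Section St.
Variable n : nat.
Local Notation c := (@ord_max n).
Implicit Types (v : state n.+1).

Lemma setst_id v (i : 'I_n.+1) b b' : setst (setst v i b) i b' = setst v i b'.
Proof. by apply/ffunP => x; rewrite !ffunE; case: eqP. Qed.

Lemma setst_same v (i : 'I_n.+1) b : v i = b -> setst v i b = v.
Proof. by move=> h; apply/ffunP => x; rewrite !ffunE; case: eqP => // ->. Qed.

Lemma setst_comm v (i i' : 'I_n.+1) b b' : i != i' ->
  setst (setst v i b) i' b' = setst (setst v i' b') i b.
Proof.
move=> ne; apply/ffunP => x; rewrite !ffunE.
case: (eqVneq x i') => [->|ne']; first by rewrite ?eqxx eq_sym (negbTE ne).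
by [] || (rewrite (negbTE ne'); case: ifP).
Qed.

Lemma setst_at v (i : 'I_n.+1) b : setst v i b i = b.
Proof. by rewrite ffunE eqxx. Qed.

Lemma setst_ne v (i x : 'I_n.+1) b : x != i -> setst v i b x = v x.
Proof. by move=> ne; rewrite ffunE (negbTE ne). Qed.

Lemma eps_setst v (i : 'I_n.+1) b : eps (setst v c b) i = eps v i.
Proof.
rewrite /eps; apply: eq_card => x; rewrite !inE ffunE.
case: eqP => // ->; rewrite /=.
by rewrite ltnNge -ltnS ltn_ord.
Qed.

End St.

Section Change.
Variables (n m : nat) (D1 D2 : diagram n.+1 m).
Local Notation c := (@ord_max n).
Hypothesis hs : forall i : 'I_n.+1, i != c -> same_crossing D1 D2 i.
Hypothesis hc : crossing_change D1 D2 c.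

Lemma res_change v p q :
  res_rel D2 v p q = res_rel D1 (setst v c (~~ v c)) p q.
Proof.
rewrite /res_rel; apply: eq_existsb => i; rewrite ffunE.
case: (eqVneq i c) => [->|ne].
  case: hc => [[[-> -> -> ->] _]|[[-> -> -> ->] _]]; case: (v c) => /=;
  move: (p == ea D1 c) (p == eb D1 c) (p == ec D1 c) (p == ed D1 c)
        (q == ea D1 c) (q == eb D1 c) (q == ec D1 c) (q == ed D1 c);
  by do 8! case.
by have [[-> -> -> ->] _] := hs ne.
Qed.

Lemma sc_change v p q :
  same_circle D2 v p q = same_circle D1 (setst v c (~~ v c)) p q.
Proof. by apply: eq_connect => x y; apply: res_change. Qed.

Lemma sc_change' v p q :
  same_circle D1 v p q = same_circle D2 (setst v c (~~ v c)) p q.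
Proof.
rewrite sc_change setst_at negbK setst_id setst_same //.
Qed.

Lemma bc_change i : i != c -> eb D1 i = eb D2 i /\ ec D1 i = ec D2 i.
Proof. by move=> ne; have [[_ -> -> _] _] := hs ne. Qed.

Lemma diag_change j k : diag_opposite D1 c j k -> diag_opposite D2 c j k.
Proof.
rewrite /diag_opposite; case: hc => [[[-> -> -> ->] _]|[[-> -> -> ->] _]];
  move: (j == ea D1 c) (j == eb D1 c) (j == ec D1 c) (j == ed D1 c)
        (k == ea D1 c) (k == eb D1 c) (k == ec D1 c) (k == ed D1 c);
  by do 8! case.
Qed.

End Change.

Section Gen.
Variables (n m : nat) (D1 D2 : diagram n.+1 m) (j k : 'I_m).
Local Notation c := (@ord_max n).
Hypothesis hsc : forall v p q,
  same_circle D2 v p q = same_circle D1 (setst v c (~~ v c)) p q.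
Hypothesis hbc : forall i, i != c -> eb D1 i = eb D2 i /\ ec D1 i = ec D2 i.
Hypothesis hd1 : diag_opposite D1 c j k.
Hypothesis hd2 : diag_opposite D2 c j k.

Lemma transfer v x : lee_ideal D1 (setst v c (~~ v c)) x -> lee_ideal D2 v x.
Proof.
move=> [q [r ->]]; exists q, r; congr (_ + _).
by apply: eq_bigr => e1 _; apply: eq_bigr => e2 _; rewrite hsc.
Qed.

Lemma em_eq v i x : i != c ->
  edge_map D2 v i x = edge_map D1 (setst v c (~~ v c)) i x.
Proof. by move=> ne; rewrite /edge_map hsc; have [-> ->] := hbc ne. Qed.

Lemma gen_chain : is_chain_map D1 D2 (cross_map c j k).
Proof.
split.
  move=> a a' h v; rewrite /lee_eq /cross_map; case hv: (v c).
    by apply: transfer; rewrite hv; apply: h.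
  rewrite -mulrBr; apply: IM; apply: transfer; rewrite hv; apply: h.
move=> a v; rewrite /lee_eq /cross_map /lee_diff; case hv: (v c).
  rewrite (bigD1 c (P := fun i => v i)) //=.
  set w := setst v c false.
  have E : \sum_(i | w i) (-1) ^+ eps w i * edge_map D1 w i (a (setst w i false)) =
    \sum_(i | v i && (i != c)) (-1) ^+ eps v i * edge_map D2 v i
        (if setst v i false c then a (setst (setst v i false) c false)
         else (Xe j - Xe k) * a (setst (setst v i false) c true)).
    rewrite (eq_bigl (fun i => v i && (i != c))); last first.
      by move=> i; rewrite /w ffunE; case: eqP => [->|]; rewrite ?hv ?andbT ?andbF.
    apply: eq_bigr => i /andP[vi ne].
    by rewrite setst_ne 1?eq_sym // hv /w eps_setst em_eq // hv setst_comm // eq_sym.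
  rewrite E opprD addrCA subrr addr0; apply: IN.
  rewrite setst_at setst_id setst_same //.
  by apply: IM; apply: Kl.
rewrite (bigD1 c (P := fun i => setst v c true i)) ?setst_at //=.
rewrite mulrDr.
set u := setst v c true.
have E : (Xe j - Xe k) * \sum_(i | u i && (i != c)) (-1) ^+ eps u i * edge_map D1 u i (a (setst u i false)) =
    \sum_(i | v i) (-1) ^+ eps v i * edge_map D2 v i
        (if setst v i false c then a (setst (setst v i false) c false)
         else (Xe j - Xe k) * a (setst (setst v i false) c true)).
  rewrite mulr_sumr (eq_bigl (fun i => v i)); last first.
    by move=> i; rewrite /u ffunE; case: eqP => [->|]; rewrite ?hv ?andbT ?andbF.
  apply: eq_bigr => i vi.
  have ne : i != c by apply: contraTneq vi => ->; rewrite hv.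
  rewrite setst_ne 1?eq_sym // hv /u eps_setst em_eq // hv; rewrite setst_comm; last by rewrite eq_sym.
  by rewrite edge_mapM mulrCA.
rewrite E addrK.
rewrite /u setst_id [setst v c false]setst_same //.
apply: transfer; rewrite hv mulrCA; apply: IM.
by rewrite -edge_mapM; apply: Kl => //; rewrite setst_at.
Qed.

End Gen.

Theorem mainTheorem4 (n m : nat) (Dp Dm : diagram n.+1 m) (j k : 'I_m) :
  wf_diagram Dp -> wf_diagram Dm ->
  (forall i : 'I_n.+1, i != ord_max -> same_crossing Dp Dm i) ->
  crossing_change Dp Dm ord_max ->
  positive_crossing Dp ord_max -> negative_crossing Dm ord_max ->
  diag_opposite Dp ord_max j k ->
  is_chain_map Dp Dm (cross_map ord_max j k) /\
  is_chain_map Dm Dp (cross_map ord_max j k).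
Proof.
move=> _ _ hs hc _ _ hd.
have hd' := diag_change hc hd.
split.
  apply: gen_chain => //.
  - exact: sc_change hs hc.
  - exact: bc_change hs.
apply: gen_chain => //.
- exact: sc_change' hs hc.
- by move=> i ne; have [-> ->] := bc_change hs ne.
Qed.
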